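(* Let $d$ be an integer and $x$ a real number with $0<d\leqslant x/2$. Then $$\sum_{K_d-d<k\leqslant K_d}\Big(d^2\lfloor x/k\rfloor+\frac{2dx}{\lfloor x/k\rfloor}-x^2F(x/k)\Big)=\frac83\,d^2\sqrt{dx}+O(d^{7/2}x^{-1/2})+O(d^2),$$ where $k$ runs over integers, with absolute implied constants.
   Context: $\lfloor\cdot\rfloor$ denotes the integer part. For an integer $d\geqslant 0$ and real $x>0$, $K_d=K_d(x)=\big\lfloor \big(d+\sqrt{d^2+4dx}\,\big)/2\big\rfloor$. For real $t$, $F(t)=\sum_{n>t-1}\frac{1}{n^2(n+1)^2}$, summed over positive integers $n>t-1$. *)

(* Defs.v *)
From Stdlib Require Import Reals Lra Lia ZArith List.
From Coquelicot Require Import Coquelicot.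
Open Scope R_scope.

Definition floorZ (r : R) : Z := Int_part r.

Definition Kd (d : Z) (x : R) : Z :=
  floorZ ((IZR d + sqrt (IZR d ^ 2 + 4 * IZR d * x)) / 2).

(* F(t) = sum over positive integers n > t - 1 of 1/(n^2 (n+1)^2);
   positive integers are indexed as n = m+1, m : nat. *)
Definition F (t : R) : R :=
  Series (fun m : nat =>
    let n := INR (S m) in
    if Rlt_dec (t - 1) n then 1 / (n ^ 2 * (n + 1) ^ 2) else 0).

Definition sum_Ioc (a b : Z) (f : Z -> R) : R :=
  fold_right Rplus 0
    (map (fun i : nat => f (a + 1 + Z.of_nat i)%Z) (seq 0 (Z.to_nat (b - a)))).

Definition summand (d : Z) (x : R) (k : Z) : R :=
  let q := IZR (floorZ (x / IZR k)) in
  IZR d ^ 2 * q + 2 * IZR d * x / q - x ^ 2 * F (x / IZR k).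

(* Main.v *)
Require Import Defs.
From Stdlib Require Import Reals Lra Lia ZArith List.
From Coquelicot Require Import Coquelicot.
Open Scope R_scope.

Lemma lim_inv_S : is_lim_seq (fun n => / INR (S n)) 0.
Proof.
  assert (H := is_lim_seq_inv _ _ (proj1 (is_lim_seq_incr_1 INR p_infty) is_lim_seq_INR)).
  simpl in H. apply H. discriminate.
Qed.

Lemma lim_bound (g : nat -> R) (A : R) :
  (forall m, Rabs (g m) <= A * / INR (S m)) -> is_lim_seq g 0.
Proof.
  intros Hg.
  apply is_lim_seq_le_le with (u := fun n => - (A * / INR (S n))) (w := fun n => A * / INR (S n)).
  - intros n; specialize (Hg n); apply Rabs_le_between in Hg; lra.
  - assert (H := is_lim_seq_scal_l _ A _ lim_inv_S).
    assert (H2 := proj1 (is_lim_seq_opp _ _) H). simpl in H2.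
    replace (- (A * 0)) with 0 in H2 by ring. exact H2.
  - assert (H := is_lim_seq_scal_l _ A _ lim_inv_S). simpl in H.
    replace (A * 0) with 0 in H by ring. exact H.
Qed.

Definition sel (t : R) (f : nat -> R) (m : nat) : R :=
  if Rlt_dec (t - 1) (INR (S m)) then f m else 0.

Lemma tele_sum (t : R) (gg : nat -> R) (N : nat) :
  (forall m, t - 1 < INR (S m) <-> (N <= m)%nat) ->
  forall n, (N <= n)%nat ->
  sum_n (sel t (fun m => gg m - gg (S m))) n = gg N - gg (S n).
Proof.
  intros Ht.
  assert (Hz : forall n, (n < N)%nat -> sum_n (sel t (fun m => gg m - gg (S m))) n = 0).
  { induction n; intros Hn.
    - rewrite sum_O. unfold sel. destruct (Rlt_dec _ _) as [h|h]; auto.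
      apply Ht in h. lia.
    - rewrite sum_Sn, IHn by lia. unfold sel. destruct (Rlt_dec _ _) as [h|h].
      apply Ht in h; lia. unfold plus; simpl; ring. }
  induction n; intros Hn.
  - assert (N = 0%nat) by lia. subst. rewrite sum_O. unfold sel.
    destruct (Rlt_dec _ _) as [h|h]; auto. exfalso; apply h, Ht; lia.
  - destruct (Nat.eq_dec N (S n)) as [e|e].
    + subst. rewrite sum_Sn, Hz by lia. unfold sel.
      destruct (Rlt_dec _ _) as [h|h]. unfold plus; simpl; ring.
      exfalso; apply h, Ht; lia.
    + rewrite sum_Sn, IHn by lia. unfold sel.
      destruct (Rlt_dec _ _) as [h|h]. unfold plus; simpl; ring.
      exfalso; apply h, Ht; lia.
Qed.

Lemma tele_series (t : R) (gg : nat -> R) (N : nat) :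
  (forall m, t - 1 < INR (S m) <-> (N <= m)%nat) ->
  is_lim_seq gg 0 ->
  is_lim_seq (sum_n (sel t (fun m => gg m - gg (S m)))) (gg N).
Proof.
  intros Ht Hg.
  apply is_lim_seq_ext_loc with (u := fun n => gg N - gg (S n)).
  - exists N. intros n Hn. symmetry. apply tele_sum; auto.
  - assert (H := is_lim_seq_minus' (fun _ => gg N) (fun n => gg (S n)) (gg N) 0
      (is_lim_seq_const _) (proj1 (is_lim_seq_incr_1 gg 0) Hg)).
    rewrite Rminus_0_r in H. exact H.
Qed.

Lemma sum_n_le' (u v : nat -> R) : (forall m, u m <= v m) -> forall n, sum_n u n <= sum_n v n.
Proof.
  intros H n; induction n.
  - rewrite !sum_O; auto.
  - rewrite !sum_Sn. unfold plus; simpl. specialize (H (S n)). lra.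
Qed.

Definition aa (m : nat) : R := let n := INR (S m) in 1 / (n ^ 2 * (n + 1) ^ 2).
Definition phu (y : R) : R := 1 / (3 * y ^ 3).
Definition phl (y : R) : R := 1 / (3 * y ^ 3) - 1 / y ^ 5.
Definition gu (m : nat) : R := phu (INR (S m)).
Definition gl (m : nat) : R := phl (INR (S m)).

Lemma F_sel t : F t = Series (sel t aa).
Proof. reflexivity. Qed.

Lemma INRS_ge1 m : 1 <= INR (S m).
Proof. rewrite S_INR. assert (0 <= INR m) by apply pos_INR. lra. Qed.

Lemma inv_pow_le (n : R) (k : nat) : 1 <= n -> (1 <= k)%nat -> / n ^ k <= / n.
Proof.
  intros Hn Hk. apply Rinv_le_contravar. lra.
  destruct k. lia. simpl. rewrite <- (Rmult_1_r n) at 1. apply Rmult_le_compat_l. lra.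
  apply pow_R1_Rle; lra.
Qed.

Lemma aa_up m : aa m <= gu m - gu (S m).
Proof.
  unfold aa, gu, phu. rewrite (S_INR (S m)). set (n := INR (S m)).
  assert (1 <= n) by apply INRS_ge1.
  assert (E : 1 / (3 * n ^ 3) - 1 / (3 * (n + 1) ^ 3) - 1 / (n ^ 2 * (n + 1) ^ 2)
             = / (3 * n ^ 3 * (n+1)^3)) by (field; lra).
  assert (0 < / (3 * n ^ 3 * (n+1)^3)).
  { apply Rinv_0_lt_compat. apply Rmult_lt_0_compat. apply Rmult_lt_0_compat; try lra.
    apply pow_lt; lra. apply pow_lt; lra. }
  lra.
Qed.

Lemma aa_lo m : gl m - gl (S m) <= aa m.
Proof.
  unfold aa, gl, phl. rewrite (S_INR (S m)). set (n := INR (S m)).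
  assert (1 <= n) by apply INRS_ge1.
  assert (E : 1 / (n ^ 2 * (n + 1) ^ 2) - (1 / (3 * n ^ 3) - 1 / n ^ 5 - (1 / (3 * (n + 1) ^ 3) - 1 / (n + 1) ^ 5))
             = (3 * ((n+1)^5 - n^5) - n^2 * (n+1)^2) * / (3 * n ^ 5 * (n+1)^5)) by (field; lra).
  assert (0 < / (3 * n ^ 5 * (n+1)^5)).
  { apply Rinv_0_lt_compat. apply Rmult_lt_0_compat. apply Rmult_lt_0_compat; try lra.
    apply pow_lt; lra. apply pow_lt; lra. }
  assert (0 <= 3 * ((n+1)^5 - n^5) - n^2 * (n+1)^2).
  { assert (1 <= n^2) by nra. nra. }
  assert (0 <= (3 * ((n+1)^5 - n^5) - n^2 * (n+1)^2) * / (3 * n ^ 5 * (n+1)^5)) by (apply Rmult_le_pos; lra).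
  lra.
Qed.

Lemma gu_lim : is_lim_seq gu 0.
Proof.
  apply lim_bound with (A := 1). intros m. unfold gu, phu. set (n := INR (S m)).
  assert (1 <= n) by apply INRS_ge1.
  assert (h := inv_pow_le n 3 H ltac:(lia)).
  assert (0 < / n ^ 3) by (apply Rinv_0_lt_compat, pow_lt; lra).
  rewrite Rabs_pos_eq.
  - replace (1 / (3 * n^3)) with (/3 * / n^3) by (field; lra). lra.
  - replace (1 / (3 * n^3)) with (/3 * / n^3) by (field; lra). lra.
Qed.

Lemma gl_lim : is_lim_seq gl 0.
Proof.
  apply lim_bound with (A := 2). intros m. unfold gl, phl. set (n := INR (S m)).
  assert (1 <= n) by apply INRS_ge1.
  assert (h := inv_pow_le n 3 H ltac:(lia)).
  assert (h5 := inv_pow_le n 5 H ltac:(lia)).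
  assert (0 < / n ^ 3) by (apply Rinv_0_lt_compat, pow_lt; lra).
  assert (0 < / n ^ 5) by (apply Rinv_0_lt_compat, pow_lt; lra).
  replace (1 / (3 * n^3) - 1 / n^5) with (/3 * / n^3 - / n^5) by (field; lra).
  apply Rabs_le. lra.
Qed.

Lemma F_bounds (t : R) (z : Z) : (1 <= z)%Z -> IZR z <= t < IZR z + 1 ->
  phl (IZR z) <= F t <= phu (IZR z).
Proof.
  intros Hz Ht.
  set (N := Z.to_nat (z - 1)).
  assert (HN : INR (S N) = IZR z).
  { rewrite INR_IZR_INZ. unfold N. rewrite Nat2Z.inj_succ, Z2Nat.id by lia. f_equal; lia. }
  assert (Hc : forall m, t - 1 < INR (S m) <-> (N <= m)%nat).
  { intros m. rewrite INR_IZR_INZ. split; intros h.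
    - assert (IZR z - 1 < IZR (Z.of_nat (S m))) by lra.
      rewrite <- minus_IZR in H. apply lt_IZR in H. unfold N. lia.
    - assert (IZR z <= IZR (Z.of_nat (S m))). { apply IZR_le. unfold N in h. lia. }
      lra. }
  assert (Hu := tele_series t gu N Hc gu_lim).
  assert (Hl := tele_series t gl N Hc gl_lim).
  assert (Hex : ex_series (sel t aa)).
  { apply (@ex_series_le R_AbsRing R_CompleteNormedModule) with (b := sel t (fun m => gu m - gu (S m))).
    - intros n. unfold sel. destruct (Rlt_dec _ _).
      + assert (0 <= aa n).
        { unfold aa. assert (1 <= INR (S n)) by apply INRS_ge1.
          apply Rlt_le. unfold Rdiv. rewrite Rmult_1_l. apply Rinv_0_lt_compat.
          apply Rmult_lt_0_compat; apply pow_lt; lra. }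
        change norm with Rabs; simpl. rewrite Rabs_pos_eq by lra. apply aa_up.
      + change norm with Rabs; simpl. rewrite Rabs_R0. lra.
    - exists (gu N). exact Hu. }
  assert (HS := Series_correct _ Hex).
  assert (HS' : is_lim_seq (sum_n (sel t aa)) (Series (sel t aa))) by exact HS.
  assert (L1 : forall m, sel t (fun m => gl m - gl (S m)) m <= sel t aa m).
  { intros m; unfold sel; destruct (Rlt_dec _ _); [apply aa_lo | lra]. }
  assert (L2 : forall m, sel t aa m <= sel t (fun m => gu m - gu (S m)) m).
  { intros m; unfold sel; destruct (Rlt_dec _ _); [apply aa_up | lra]. }
  assert (h1 := is_lim_seq_le _ _ _ _ (sum_n_le' _ _ L1) Hl HS').
  assert (h2 := is_lim_seq_le _ _ _ _ (sum_n_le' _ _ L2) HS' Hu).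
  simpl in h1, h2. rewrite F_sel.
  unfold gu, gl in h1, h2. rewrite HN in h1, h2. split; assumption.
Qed.

Lemma term_bound (D x s q G : R) : 1 <= D -> 1 <= s -> x = D * s ^ 2 -> 1 <= q ->
  s - 2 < q < s + 1 -> phl q <= G <= phu q ->
  Rabs (D ^ 2 * q + 2 * D * x / q - x ^ 2 * G - 8 / 3 * D ^ 2 * s) <= 1280 * (D ^ 2 / s).
Proof.
  intros HD Hs Hx Hq Hqs [G1 G2]. unfold phl, phu in *.
  set (u := q - s).
  assert (E : D ^ 2 * q + 2 * D * x / q - x ^ 2 * G - 8 / 3 * D ^ 2 * s
     = D ^ 2 * (u ^ 3 * (3 * q + s) / (3 * q ^ 3)) + x ^ 2 * (1 / (3 * q ^ 3) - G)).
  { unfold u. subst x. field. lra. }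
  rewrite E.
  assert (Hu : Rabs u <= 2) by (apply Rabs_le; unfold u; lra).
  assert (Hu3 : Rabs (u ^ 3) <= 8).
  { rewrite <- RPow_abs. assert (0 <= Rabs u) by apply Rabs_pos.
    replace 8 with (2 ^ 3) by ring. apply pow_incr. lra. }
  assert (q3 : 0 < q ^ 3) by (apply pow_lt; lra).
  assert (q5 : 0 < q ^ 5) by (apply pow_lt; lra).
  assert (A : Rabs (u ^ 3 * (3 * q + s) / (3 * q ^ 3)) <= 256 / s).
  { unfold Rdiv. rewrite !Rabs_mult. rewrite (Rabs_pos_eq (3*q+s)) by lra.
    rewrite (Rabs_pos_eq (/ _)) by (apply Rlt_le, Rinv_0_lt_compat; lra).
    assert (h : Rabs (u^3) * (3*q+s) <= 8 * (6 * q)).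
    { apply Rmult_le_compat; try lra. apply Rabs_pos. }
    apply Rle_trans with (8 * (6 * q) * / (3 * q ^ 3)).
    { apply Rmult_le_compat_r. apply Rlt_le, Rinv_0_lt_compat; lra. exact h. }
    replace (8 * (6 * q) * / (3 * q ^ 3)) with (16 / q^2) by (field; lra).
    apply Rle_trans with (256 / s^2).
    { unfold Rdiv. apply Rmult_le_reg_r with (q^2 * s^2). { apply Rmult_lt_0_compat; apply pow_lt; lra. }
      replace (16 * / q ^ 2 * (q ^ 2 * s ^ 2)) with (16 * s^2) by (field; lra).
      replace (256 * / s ^ 2 * (q ^ 2 * s ^ 2)) with (256 * q^2) by (field; lra).
      assert ((4*q-s)*(4*q+s) > 0) by (apply Rmult_lt_0_compat; lra). nra. }
    unfold Rdiv. apply Rmult_le_compat_l. lra. apply Rinv_le_contravar. lra. nra. }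
  assert (B : Rabs (x ^ 2 * (1 / (3 * q ^ 3) - G)) <= 1024 * (D ^ 2 / s)).
  { rewrite Rabs_mult. rewrite Rabs_pos_eq by (apply pow_le; subst x; nra).
    assert (Rabs (1 / (3 * q ^ 3) - G) <= 1 / q ^ 5) by (apply Rabs_le; lra).
    apply Rle_trans with (x ^ 2 * (1 / q ^ 5)).
    { apply Rmult_le_compat_l. apply pow_le; subst x; nra. auto. }
    subst x. unfold Rdiv. apply Rmult_le_reg_r with (q^5 * s). nra.
    replace ((D * s ^ 2) ^ 2 * (1 * / q ^ 5) * (q ^ 5 * s)) with (D^2 * s^5) by (field; lra).
    replace (1024 * (D ^ 2 * / s) * (q ^ 5 * s)) with (D^2 * (4 * q)^5) by (field; lra).
    apply Rmult_le_compat_l. nra. apply pow_incr. lra. }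
  eapply Rle_trans. apply Rabs_triang.
  rewrite Rabs_mult, (Rabs_pos_eq (D^2)) by nra.
  assert (0 < D^2) by nra.
  assert (D ^ 2 * Rabs (u ^ 3 * (3 * q + s) / (3 * q ^ 3)) <= D^2 * (256 / s)) by (apply Rmult_le_compat_l; lra).
  assert (D ^ 2 * (256 / s) = 256 * (D^2 / s)) by (field; lra).
  lra.
Qed.

Lemma sum_list_bound (g : nat -> R) (l : list nat) (M B : R) :
  (forall i, In i l -> Rabs (g i - M) <= B) ->
  Rabs (fold_right Rplus 0 (map g l) - INR (length l) * M) <= INR (length l) * B.
Proof.
  induction l as [|a l IH]; intros H.
  - simpl. rewrite Rmult_0_l, Rminus_0_r, Rabs_R0. lra.
  - simpl length. rewrite S_INR. simpl.
    replace (g a + fold_right Rplus 0 (map g l) - (INR (length l) + 1) * M)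
      with ((g a - M) + (fold_right Rplus 0 (map g l) - INR (length l) * M)) by ring.
    eapply Rle_trans. apply Rabs_triang.
    assert (h1 := H a (or_introl eq_refl)).
    assert (h2 := IH (fun i hi => H i (or_intror hi))). lra.
Qed.

Lemma div_le_mono (x a b : R) : 0 <= x -> 0 < a -> a <= b -> x / b <= x / a.
Proof.
  intros. unfold Rdiv. apply Rmult_le_compat_l; auto. apply Rinv_le_contravar; lra.
Qed.

Lemma div_lt_mono (x a b : R) : 0 < x -> 0 < a -> a < b -> x / b < x / a.
Proof.
  intros. unfold Rdiv. apply Rmult_lt_compat_l; auto. apply Rinv_lt_contravar; nra.
Qed.

Theorem proposition7 :
  exists C1 C2 : R,
    forall (d : Z) (x : R),
      (0 < d)%Z -> IZR d <= x / 2 ->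
      Rabs (sum_Ioc (Kd d x - d)%Z (Kd d x) (summand d x)
            - 8 / 3 * IZR d ^ 2 * sqrt (IZR d * x))
      <= C1 * (IZR d ^ 3 * sqrt (IZR d) / sqrt x) + C2 * IZR d ^ 2.
Proof.
  exists 1280, 0. intros d x Hd Hdx.
  set (D := IZR d).
  assert (HD : 1 <= D) by (apply IZR_le; lia).
  assert (Hx : 2 * D <= x) by (unfold D; unfold Rdiv in Hdx; lra).
  set (r := sqrt (D ^ 2 + 4 * D * x)).
  assert (Hr2 : r * r = D ^ 2 + 4 * D * x) by (apply sqrt_sqrt; nra).
  assert (Hr0 : 0 <= r) by apply sqrt_pos.
  assert (Hr3 : 3 * D <= r) by nra.
  set (K0 := (D + r) / 2).
  assert (HK0 : K0 * (K0 - D) = D * x) by (unfold K0; nra).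
  assert (HK0D : 2 * D <= K0) by (unfold K0; lra).
  set (K := Kd d x).
  assert (HK : IZR K <= K0 < IZR K + 1).
  { unfold K, Kd, floorZ. fold D. fold r. fold K0.
    destruct (base_Int_part K0). lra. }
  set (s := sqrt (x / D)).
  assert (Hs2 : s * s = x / D) by (apply sqrt_sqrt; apply Rle_mult_inv_pos; lra).
  assert (Hs0 : 0 <= s) by apply sqrt_pos.
  assert (HxD : x = D * s ^ 2) by (simpl; rewrite Rmult_1_r, Hs2; field; lra).
  assert (Hs1 : 1 <= s).
  { assert (2 <= x / D). { apply Rmult_le_reg_r with D. lra. replace (x / D * D) with x by (field; lra). lra. } nra. }
  set (u := K0 / D).
  assert (Hu : u * (u - 1) = s * s).
  { rewrite Hs2. unfold u. apply Rmult_eq_reg_r with (D * D). 2: nra.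
    replace (K0 / D * (K0 / D - 1) * (D * D)) with (K0 * (K0 - D)) by (field; lra).
    rewrite HK0. field. lra. }
  assert (Hu2 : 2 <= u).
  { unfold u. apply Rmult_le_reg_r with D. lra.
    replace (K0 / D * D) with K0 by (field; lra). unfold K0. lra. }
  assert (Hsu : s < u <= s + 1) by (split; nra).
  assert (HsqDx : sqrt (D * x) = D * s).
  { unfold s. rewrite <- (sqrt_square D) at 2 by lra. rewrite <- sqrt_mult_alt by nra.
    f_equal. field. lra. }
  assert (HsqDs : s * sqrt D = sqrt x).
  { unfold s. rewrite <- sqrt_mult_alt by (apply Rle_mult_inv_pos; lra). f_equal. field. lra. }
  assert (HsqD : 0 < sqrt D) by (apply sqrt_lt_R0; lra).
  assert (RHS : 1280 * (D ^ 3 * sqrt D / sqrt x) + 0 * D ^ 2 = D * (1280 * (D ^ 2 / s))).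
  { rewrite <- HsqDs. field. split; lra. }
  rewrite RHS, HsqDx.
  unfold sum_Ioc.
  replace (Z.to_nat (K - (K - d))) with (Z.to_nat d) by (f_equal; lia).
  replace (8 / 3 * D ^ 2 * (D * s)) with (INR (length (seq 0 (Z.to_nat d))) * (8/3 * D^2 * s)).
  2: { rewrite length_seq, INR_IZR_INZ, Z2Nat.id by lia. fold D. ring. }
  replace (D * (1280 * (D ^ 2 / s))) with (INR (length (seq 0 (Z.to_nat d))) * (1280 * (D ^ 2 / s))).
  2: { rewrite length_seq, INR_IZR_INZ, Z2Nat.id by lia. fold D. ring. }
  apply sum_list_bound. intros i Hi. apply in_seq in Hi.
  set (k := (K - d + 1 + Z.of_nat i)%Z).
  assert (Hk : K0 - D < IZR k <= K0).
  { assert (IZR k <= IZR K) by (apply IZR_le; unfold k; lia).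
    assert (IZR K - D + 1 <= IZR k).
    { unfold D. rewrite <- minus_IZR, <- plus_IZR. apply IZR_le. unfold k. lia. }
    lra. }
  set (t := x / IZR k).
  assert (Ht1 : u - 1 <= t).
  { apply Rle_trans with (x / K0).
    - right. unfold u. apply Rmult_eq_reg_r with (D * K0). 2: (apply Rgt_not_eq, Rmult_lt_0_compat; lra).
      replace ((K0 / D - 1) * (D * K0)) with (K0 * (K0 - D)) by (field; lra).
      rewrite HK0. field. lra.
    - apply div_le_mono; lra. }
  assert (Ht2 : t < u).
  { apply Rlt_le_trans with (x / (K0 - D)).
    - apply div_lt_mono; lra.
    - right. unfold u. apply Rmult_eq_reg_r with (D * (K0 - D)). 2: (apply Rgt_not_eq, Rmult_lt_0_compat; lra).
      replace (K0 / D * (D * (K0 - D))) with (K0 * (K0 - D)) by (field; lra).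
      rewrite HK0. field. lra. }
  set (z := floorZ t).
  assert (Hz : IZR z <= t < IZR z + 1).
  { unfold z, floorZ. destruct (base_Int_part t). lra. }
  assert (Hz1 : (1 <= z)%Z).
  { assert (0 < IZR z) by lra. apply lt_IZR in H. lia. }
  assert (HF := F_bounds t z Hz1 Hz).
  unfold summand. fold t. fold z. fold D.
  apply term_bound; try lra.
  - apply IZR_le in Hz1. exact Hz1.
Qed.
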